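(* Let $n=2m+2$ with $m\ge0$, let $a,b,c,d\in\mathbb{C}$, and suppose $T_n$ (degree $n$) and $U_{n-2}$ (degree at most $n-2$) satisfy $T_n^2-HU_{n-2}^2=1$ with $$T_n(z)=1-\frac{2(z-c)(z-d)\prod_{j=1}^m(z-x_j)^2}{(a-c)(a-d)\prod_{j=1}^m(a-x_j)^2}=-1+\frac{2(z-a)(z-b)\prod_{j=1}^m(z-y_j)^2}{(c-a)(c-b)\prod_{j=1}^m(c-y_j)^2}$$ for some $x_1,\dots,x_m,y_1,\dots,y_m\in\mathbb{C}$. Put $s_k:=\tfrac12\bigl(a^k+b^k+c^k-d^k\bigr)$, $k=1,\dots,2m+1$, and form $F_k,\mathbf F,\mathbf F_i$ with $\nu=m+1$, $\mu=m$. Then $\det\mathbf F\ne0$ and $y_1,\dots,y_m$ (with multiplicity) are exactly the zeros of $$y^{m}\det\mathbf F+y^{m-1}\det\mathbf F_1+\dots+y\det\mathbf F_{m-1}+\det\mathbf F_m.$$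
   Context: $H(z)=(z-a)(z-b)(z-c)(z-d)$. Given complex numbers $s_1,s_2,\dots$: $F_0:=1$, $F_k:=0$ for $k<0$, and for $k\ge1$, $F_k:=\frac{(-1)^k}{k!}\det M_k$ where $M_k$ is the $k\times k$ matrix with entry $s_{i-j+1}$ for $j\le i$, entry $i$ at position $(i,i+1)$, and $0$ elsewhere. For integers $\nu\ge0,\mu\ge0$, $\mathbf F$ is the $\mu\times\mu$ matrix with $(i,j)$ entry $F_{\nu+i-j}$, and $\mathbf F_i$ ($1\le i\le\mu$) is $\mathbf F$ with its $i$-th column replaced by $(-F_{\nu+1},\dots,-F_{\nu+\mu})^T$. Convention: if $\mu=0$, $\det\mathbf F:=1$. *)

(* Defs.v *)
From HB Require Import structures.
From mathcomp Require Import all_boot all_order all_algebra.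
Set Implicit Arguments. Unset Strict Implicit. Unset Printing Implicit Defensive.
Import Order.TTheory GRing.Theory Num.Theory.
Local Open Scope ring_scope.

Definition Hpoly (R : numClosedFieldType) (a b c d : R) : {poly R} :=
  ('X - a%:P) * ('X - b%:P) * ('X - c%:P) * ('X - d%:P).

(* The k x k matrix M_k (0-based indices): entry s_{i-j+1} for j <= i,
   entry i+1 (the 1-based row index) at position (i, i+1), 0 elsewhere. *)
Definition Mmat (R : numClosedFieldType) (s : nat -> R) (k : nat) : 'M[R]_k :=
  \matrix_(i < k, j < k)
    (if (j <= i)%N then s (i - j).+1
     else if j == i.+1 :> nat then (i.+1)%:R else 0).

Definition Fk (R : numClosedFieldType) (s : nat -> R) (k : int) : R :=
  match k with
  | Posz n => (-1) ^+ n / (n`!)%:R * \det (Mmat s n)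
  | Negz _ => 0
  end.

Definition FF (R : numClosedFieldType) (s : nat -> R) (nu mu : nat) : 'M[R]_mu :=
  \matrix_(i < mu, j < mu) Fk s (nu%:Z + i%:Z - j%:Z).

(* Bold F_{c+1} (c 0-based): column c replaced by (-F_{nu+1},...,-F_{nu+mu})^T. *)
Definition FFi (R : numClosedFieldType) (s : nat -> R) (nu mu : nat) (c : 'I_mu)
  : 'M[R]_mu :=
  \matrix_(i < mu, j < mu)
    (if j == c then - Fk s (Posz (nu + i.+1)%N) else (FF s nu mu) i j).

Definition Fpoly (R : numClosedFieldType) (s : nat -> R) (nu mu : nat) : {poly R} :=
  (\det (FF s nu mu)) *: 'X^mu
  + \sum_(c < mu) (\det (@FFi R s nu mu c)) *: 'X^(mu - c.+1).

(* Main.v *)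
Require Import Defs.
From HB Require Import structures.
From mathcomp Require Import all_boot all_order all_algebra.
From mathcomp Require Import ring zify.
Set Implicit Arguments. Unset Strict Implicit. Unset Printing Implicit Defensive.
Import Order.TTheory GRing.Theory Num.Theory.
Local Open Scope ring_scope.

Definition rv (R : nzRingType) (n : nat) (p : {poly R}) : {poly R} :=
  \poly_(i < n.+1) p`_(n - i).

Lemma coef_rv (R : nzRingType) (n : nat) (p : {poly R}) i :
  (rv n p)`_i = if (i <= n)%N then p`_(n - i) else 0.
Proof. by rewrite coef_poly ltnS. Qed.

Lemma rvD (R : nzRingType) (n : nat) (p q : {poly R}) : rv n (p + q) = rv n p + rv n q.
Proof. by apply/polyP=> i; rewrite coefD !coef_rv; case: ifP; rewrite ?coefD ?addr0. Qed.

Lemma rv0 (R : nzRingType) (n : nat) : rv n (0 : {poly R}) = 0.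
Proof. by apply/polyP=> i; rewrite coef_rv !coef0 if_same. Qed.

Lemma rvN (R : nzRingType) (n : nat) (p : {poly R}) : rv n (- p) = - rv n p.
Proof. by apply/polyP=> i; rewrite coefN !coef_rv; case: ifP; rewrite ?coefN ?oppr0. Qed.

Lemma rvB (R : nzRingType) (n : nat) (p q : {poly R}) : rv n (p - q) = rv n p - rv n q.
Proof. by rewrite rvD rvN. Qed.

Lemma rvZ (R : nzRingType) (n : nat) (c : R) (p : {poly R}) : rv n (c *: p) = c *: rv n p.
Proof. by apply/polyP=> i; rewrite coefZ !coef_rv; case: ifP; rewrite ?coefZ ?mulr0. Qed.

Lemma rv_sum (R : nzRingType) (n : nat) (I : finType) (F : I -> {poly R}) :
  rv n (\sum_i F i) = \sum_i rv n (F i).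
Proof. exact: (big_morph (rv n) (rvD n) (rv0 _ n)). Qed.

Lemma rvXn (R : nzRingType) (n k : nat) : (k <= n)%N -> rv n ('X^k : {poly R}) = 'X^(n - k).
Proof.
move=> kn; apply/polyP=> i; rewrite coef_rv !coefXn.
case: ifP => [ilen|/negbT]; last first.
  by rewrite -ltnNge => ni; case: eqP => //; lia.
have -> : (n - i == k)%N = (i == n - k)%N by apply/idP/idP => /eqP H; apply/eqP; lia.
by [].
Qed.

Lemma poly_le (R : nzRingType) (n : nat) (p : {poly R}) :
  (size p <= n)%N -> p = \sum_(i < n) p`_i *: 'X^i.
Proof.
move=> sp; rewrite -poly_def; apply/polyP=> i; rewrite coef_poly.
case: ifP => // /negbT; rewrite -leqNgt => ni.
by move/leq_sizeP: sp; apply; exact: ni.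
Qed.

Lemma rv_le (R : nzRingType) (n : nat) (p : {poly R}) :
  rv n p = \sum_(i < n.+1) p`_i *: 'X^(n - i).
Proof.
apply/polyP=> i; rewrite coef_rv coef_sum.
under eq_bigr do rewrite coefZ coefXn.
case: ifP => [ilen|/negbT]; last first.
  rewrite -ltnNge => ni; rewrite big1 // => j _.
  case: eqP; rewrite ?mulr0 //; have := ltn_ord j; lia.
have ho : (n - i < n.+1)%N by lia.
rewrite (bigD1 (Ordinal ho)) //=; rewrite subKn // eqxx mulr1 big1 ?addr0 // => j ji.
case: eqP; rewrite ?mulr0 // => E; case/eqP: ji; apply/val_inj => /=.
have := ltn_ord j; lia.
Qed.

Lemma rv_mul (R : comNzRingType) (n1 n2 : nat) (p q : {poly R}) :
  (size p <= n1.+1)%N -> (size q <= n2.+1)%N ->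
  rv (n1 + n2) (p * q) = rv n1 p * rv n2 q.
Proof.
move=> sp sq; rewrite (poly_le sp) (poly_le sq) mulr_suml !rv_sum mulr_suml.
apply: eq_bigr => i _; rewrite mulr_sumr rv_sum mulr_sumr; apply: eq_bigr => j _.
have hi := ltn_ord i; have hj := ltn_ord j.
rewrite -scalerAl -scalerAr !rvZ -exprD rvXn; last by lia.
rewrite !rvXn; try lia.
rewrite -scalerAl -scalerAr -exprD; congr (_ *: (_ *: 'X^_)); lia.
Qed.

Lemma rv_rv (R : nzRingType) (n : nat) (p : {poly R}) :
  (size p <= n.+1)%N -> rv n (rv n p) = p.
Proof.
move=> sp; apply/polyP=> i; rewrite !coef_rv.
case: ifP => [ilen|/negbT]; first by rewrite leq_subr subKn.
rewrite -ltnNge => ni; apply/esym; move/leq_sizeP: sp; apply; exact: ni.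
Qed.

Lemma dvdXnP (R : fieldType) (n : nat) (p : {poly R}) :
  reflect (forall i, (i < n)%N -> p`_i = 0) ('X^n %| p).
Proof.
apply: (iffP idP).
  by case/dvdpP=> q -> i ilt; rewrite coefMXn ilt.
move=> H; apply/dvdpP; exists (\poly_(i < size p) p`_(i + n)).
apply/polyP=> i; rewrite coefMXn; case: ifP => [/H //|/negbT].
rewrite -leqNgt => ni; rewrite coef_poly subnK //.
case: ifP => // /negbT; rewrite -leqNgt => si.
by move/leq_sizeP: (leqnn (size p)); apply; exact: leq_trans si (leq_subr n i).
Qed.

Lemma dvdXn_cancel (R : fieldType) (n : nat) (p q : {poly R}) :
  q`_0 != 0 -> 'X^n %| p * q -> 'X^n %| p.
Proof.
move=> q0; rewrite Gauss_dvdpl //; apply: coprimep_expl.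
rewrite coprimep_sym -['X]subr0 -polyC0 coprimep_XsubC /root horner_coef0 //.
Qed.

Lemma dvdXn_small (R : fieldType) (n : nat) (p : {poly R}) :
  (size p <= n)%N -> 'X^n %| p -> p = 0.
Proof.
move=> sp dv; apply/eqP; apply: contraT => p0.
have := dvdp_leq p0 dv; rewrite size_polyXn => h.
by have := leq_trans h sp; rewrite ltnn.
Qed.
Definition Emat (R : numClosedFieldType) (s : nat -> R) (k t : nat) : 'M[R]_k :=
  \matrix_(i < k, j < k)
    (if (i.+1 == k)%N then s (k - j + t)%N
     else if (j <= i)%N then s (i - j).+1
     else if j == i.+1 :> nat then (i.+1)%:R else 0).

Lemma Emat0 (R : numClosedFieldType) (s : nat -> R) (k : nat) : Emat s k 0 = Mmat s k.
Proof.
apply/matrixP=> i j; rewrite !mxE.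
case: eqP => // E; have jk := ltn_ord j; rewrite (_ : (j <= i)%N); last by lia.
congr s; lia.
Qed.

Lemma Erec (R : numClosedFieldType) (s : nat -> R) (k t : nat) :
  \det (Emat s k.+1 t) = s t.+1 * \det (Mmat s k) - k%:R * \det (Emat s k t.+1).
Proof.
rewrite (expand_det_col _ ord_max) (bigD1_ord ord_max) //=.
rewrite {1}/cofactor -signr_odd addnn odd_double expr0 mul1r.
have -> : row' ord_max (col' ord_max (Emat s k.+1 t)) = Mmat s k.
  apply/matrixP=> i j; rewrite !mxE !lift_max.
  by rewrite eqSS (ltn_eqF (ltn_ord i)).
rewrite mxE eqxx subSnn add1n; congr (_ + _).
case: k => [|k].
  by rewrite big_ord0 mul0r oppr0.
rewrite (bigD1_ord ord_max) //= big1 ?addr0; last first.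
  move=> i _; have hi := ltn_ord i; rewrite mxE !lift_max /=.
  rewrite ifF; last by apply/negbTE; lia.
  rewrite ifF; last by apply/negbTE; lia.
  by rewrite ifF ?mul0r //; apply/negbTE; lia.
rewrite mxE /= /bump ltnn add0n eqxx ifF; last by apply/negbTE; lia.
rewrite ifF; last by apply/negbTE; lia.
rewrite /cofactor /= /bump ltnn add0n addnS -signr_odd /= addnn odd_double /=.
rewrite expr1 mulN1r mulrN; congr (- (_ * _)).
congr (\det _); apply/matrixP=> i j; rewrite !mxE !lift_max /= /bump ?lift_max ltnn add0n.
have hi := ltn_ord i; have hj := ltn_ord j.
case: (eqVneq (i : nat) k) => [->|ik].
  by rewrite leqnn add1n !eqxx; congr s; lia.
rewrite (_ : (k <= i)%N = false) ?add0n; last by apply/negbTE; lia.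
rewrite ifF; last by apply/negbTE; lia.
by rewrite [in RHS]ifF //; apply/negbTE; lia.
Qed.

Lemma detM (R : numClosedFieldType) (s : nat -> R) (j : nat) :
  \det (Mmat s j) = (-1) ^+ j * j`!%:R * Fk s (Posz j).
Proof.
have fne : j`!%:R != 0 :> R by rewrite pnatr_eq0 -lt0n fact_gt0.
rewrite /Fk; set D := \det _.
have -> : (-1) ^+ j * j`!%:R * ((-1) ^+ j / j`!%:R * D) =
   ((-1) ^+ j * (-1) ^+ j) * (j`!%:R / j`!%:R) * D :> R by ring.
by rewrite divff // -exprMn mulrNN mulr1 mul1r expr1n mul1r.
Qed.

Lemma F0 (R : numClosedFieldType) (s : nat -> R) : Fk s (Posz 0) = 1.
Proof. by rewrite /Fk det_mx00 expr0 fact0 divr1 mulr1. Qed.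

Lemma Eclosed (R : numClosedFieldType) (s : nat -> R) (k t : nat) :
  \det (Emat s k.+1 t) =
  (-1) ^+ k * k`!%:R * \sum_(r < k.+1) s (t + r.+1)%N * Fk s (Posz (k - r)%N).
Proof.
elim: k t => [|k IH] t.
  by rewrite Erec det_mx00 big_ord1 (_ : (0 - ord0 = 0)%N) // F0 addn1 expr0 fact0; ring.
rewrite Erec IH detM [in RHS]big_ord_recl (_ : (k.+1 - ord0 = k.+1)%N) //.
rewrite (_ : (t + ord0.+1 = t.+1)%N) ?addn1 //.
rewrite [in RHS](eq_bigr (fun i : 'I_k.+1 => s (t.+1 + i.+1)%N * Fk s (Posz (k - i)%N))); last first.
  by move=> i _; rewrite lift0 subSS addSnnS.
rewrite factS natrM exprS; ring.
Qed.

Lemma newton (R : numClosedFieldType) (s : nat -> R) (k : nat) :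
  (k.+1)%:R * Fk s (Posz k.+1) = - \sum_(r < k.+1) s r.+1 * Fk s (Posz (k - r)%N).
Proof.
have := Eclosed s k 0; rewrite Emat0 detM factS natrM exprS.
have fne : (-1) ^+ k * k`!%:R != 0 :> R.
  by rewrite mulf_neq0 ?signr_eq0 // pnatr_eq0 -lt0n fact_gt0.
move=> E; apply: (mulfI fne); rewrite mulrN -E.
ring.
Qed.

Ltac cring := repeat match goal with x := _ |- _ => clearbody x end; ring.

Definition lin (R : numClosedFieldType) (x : R) : {poly R} := 1 - x%:P * 'X.

Lemma dlin (R : numClosedFieldType) (x : R) : (lin x)^`() = - x%:P.
Proof. by rewrite /lin !derivE mulr1 sub0r. Qed.

Lemma lin0 (R : numClosedFieldType) (x : R) : (lin x).[0] = 1.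
Proof. by rewrite /lin !hornerE subr0. Qed.

Lemma ode (R : numClosedFieldType) (n : nat) (e g : {poly R}) :
  g`_0 != 0 -> e`_0 = 0 -> 'X^n %| e^`() * g - e * g^`() -> 'X^(n.+1) %| e.
Proof.
move=> g0 e0 /dvdXnP H; apply/dvdXnP.
suff Hs : forall k, (k <= n)%N -> forall i, (i <= k)%N -> e`_i = 0.
  move=> i0 hi0; exact: (Hs i0 hi0 i0 (leqnn i0)).
elim=> [_ i|j IH jn i]; first by rewrite leqn0 => /eqP ->.
rewrite leq_eqVlt => /orP [/eqP ->|]; last by rewrite ltnS; apply: IH; lia.
have := H j jn; rewrite coefB !coefM big_ord_recr /= big1; last first.
  move=> l _; rewrite coef_deriv IH ?mul0rn ?mul0r //; lia.
rewrite big1; last by move=> l _; rewrite IH ?mul0r //; have := ltn_ord l; lia.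
rewrite add0r subr0 subnn coef_deriv => /eqP.
by rewrite mulf_eq0 (negbTE g0) orbF mulrn_eq0 /= => /eqP.
Qed.

Definition fser (R : numClosedFieldType) (s : nat -> R) (N : nat) : {poly R} :=
  \poly_(i < N) Fk s (Posz i).

Definition geo (R : numClosedFieldType) (x : R) (N : nat) : {poly R} :=
  \poly_(i < N) x ^+ i.+1.

Lemma geoP (R : numClosedFieldType) (x : R) (N : nat) :
  'X^N %| lin x * geo x N - x%:P.
Proof.
apply/dvdXnP => i iN; rewrite /lin mulrBl mul1r -mulrA !coefE iN.
case: i iN => [|i] iN /=; first by rewrite mulr0 subr0 expr1 subrr.
by rewrite ltnW // exprS subrr subr0.
Qed.

Lemma series (R : numClosedFieldType) (a b c d : R) (s : nat -> R)
  (hs : forall k, s k = (a ^+ k + b ^+ k + c ^+ k - d ^+ k) / 2) (N : nat) :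
  'X^N %| (fser s N) ^+ 2 * lin d - lin a * lin b * lin c.
Proof.
case: N => [|n]; first by rewrite expr0 dvd1p.
set f := fser s n.+1; set S := \poly_(i < n.+1) s i.+1.
have h1 : 'X^n %| f^`() + S * f.
  apply/dvdXnP => i iN; rewrite coefD coef_deriv coefM /f /S coef_poly ltnS iN.
  rewrite -mulr_natl newton; apply/eqP; rewrite addrC subr_eq0; apply/eqP.
  apply: eq_bigr => j _; rewrite !coef_poly; have := ltn_ord j.
  by move=> hj; rewrite ifT; [rewrite ifT //|]; lia.
have hS : S *+ 2 = geo a n.+1 + geo b n.+1 + geo c n.+1 - geo d n.+1.
  apply/polyP=> i; rewrite !coefE; case: ifP => _; last by rewrite mul0rn !addr0 subr0.
  by rewrite hs; field.
set g := lin a * lin b * lin c; set h := lin d; set u := f ^+ 2 * h.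
have du : u^`() = (f *+ 2) * f^`() * h + f ^+ 2 * (- d%:P).
  rewrite /u derivM expr2 derivM /h dlin. clearbody f S g h u. ring.
have dg : g^`() = - a%:P * lin b * lin c - b%:P * lin a * lin c - c%:P * lin a * lin b.
  rewrite /g !derivM !dlin. clearbody f S g h u. ring.
have key : u^`() * g - u * g^`() = (f *+ 2) * h * g * (f^`() + S * f)
   - f ^+ 2 * ((lin a * geo a n.+1 - a%:P) * lin b * lin c * h
              + (lin b * geo b n.+1 - b%:P) * lin a * lin c * h
              + (lin c * geo c n.+1 - c%:P) * lin a * lin b * h
              - (lin d * geo d n.+1 - d%:P) * g)
   + f ^+ 2 * h * g * (geo a n.+1 + geo b n.+1 + geo c n.+1 - geo d n.+1 - S *+ 2).
  rewrite du dg /u /g /h. clearbody f S g h u. ring.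
rewrite -hS subrr mulr0 addr0 in key.
have hode : 'X^n %| (u - g)^`() * g - (u - g) * g^`().
  have -> : (u - g)^`() * g - (u - g) * g^`() = u^`() * g - u * g^`().
    rewrite derivB. clearbody f S g h u. ring.
  rewrite key; apply: dvdp_sub; first exact: dvdp_mull.
  apply: dvdp_mull; rewrite /h.
  have G := geoP; have G' := fun x => dvdp_trans (dvdp_exp2l 'X (leqnSn n)) (G R x n.+1).
  by apply: dvdp_sub; [apply: dvdp_add; [apply: dvdp_add|]|];
    do ?apply: dvdp_mulr; apply: G'.
have g0 : g`_0 = 1 by rewrite -horner_coef0 /g !hornerM !lin0 !mulr1.
apply: ode hode; first by rewrite g0 oner_neq0.
rewrite coefB -!horner_coef0 /u /g !hornerM /h !lin0 horner_coef0 /f coef_poly F0 /=.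
by rewrite !mulr1 subrr.
Qed.


Lemma size_prodX (R : numClosedFieldType) (n : nat) (x : 'I_n -> R) :
  size (\prod_(j < n) ('X - (x j)%:P)) = n.+1.
Proof.
elim: n x => [|n IH] x; first by rewrite big_ord0 size_poly1.
rewrite big_ord_recr /= size_Mmonic ?monicXsubC ?IH ?size_XsubC ?addn2 //.
exact: monic_neq0 (monic_prod_XsubC _ _ _).
Qed.

Lemma rv_lin (R : numClosedFieldType) (x : R) : rv 1 ('X - x%:P) = lin x.
Proof.
apply/polyP=> i; rewrite coef_rv /lin !coefE.
by case: i => [|[|i]] //=; rewrite ?mulr0 ?mulr1 ?subr0 ?sub0r.
Qed.

Definition Lw (R : numClosedFieldType) (m : nat) (w : 'I_m -> R) : {poly R} :=
  \sum_(j < m) w j *: 'X^(j.+1).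

Lemma coef_Lw0 (R : numClosedFieldType) (m : nat) (w : 'I_m -> R) : (Lw w)`_0 = 0.
Proof. by rewrite /Lw coef_sum big1 // => j _; rewrite coefZ coefXn mulr0. Qed.

Lemma coef_LwS (R : numClosedFieldType) (m : nat) (w : 'I_m -> R) (j : 'I_m) :
  (Lw w)`_(j.+1) = w j.
Proof.
rewrite /Lw coef_sum (bigD1 j) //= coefZ coefXn eqxx mulr1 big1 ?addr0 //.
move=> k kj; rewrite coefZ coefXn; case: eqP; rewrite ?mulr0 // => E.
by case/eqP: kj; apply: val_inj; case: E.
Qed.

Lemma coef_Lw_big (R : numClosedFieldType) (m : nat) (w : 'I_m -> R) (k : nat) :
  (m < k)%N -> (Lw w)`_k = 0.
Proof.
move=> mk; rewrite /Lw coef_sum big1 // => j _; rewrite coefZ coefXn.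
by case: eqP; rewrite ?mulr0 // => E; have := ltn_ord j; lia.
Qed.

Lemma size_Lw (R : numClosedFieldType) (m : nat) (w : 'I_m -> R) :
  (size (Lw w) <= m.+1)%N.
Proof. by apply/leq_sizeP => k hk; apply: coef_Lw_big. Qed.

Lemma FFE (R : numClosedFieldType) (s : nat -> R) (m : nat) (i j : 'I_m) :
  FF s m.+1 m i j = Fk s (Posz (m.+1 + i - j)%N).
Proof.
rewrite mxE -PoszD subzn //; have := ltn_ord j; lia.
Qed.

Lemma coef_fL (R : numClosedFieldType) (s : nat -> R) (m : nat) (w : 'I_m -> R) (i : 'I_m) :
  (fser s (m + m).+2 * Lw w)`_(m.+2 + i) = \sum_j FF s m.+1 m i j * w j.
Proof.
rewrite /Lw mulr_sumr coef_sum; apply: eq_bigr => j _.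
rewrite -scalerAr coefZ coefMXn FFE mulrC; have := ltn_ord j; have := ltn_ord i.
move=> hi hj; rewrite ifF; last by apply/negbTE; lia.
rewrite coef_poly ifT; last by lia.
by congr (Fk s (Posz _) * _); lia.
Qed.

Lemma cramer (R : numClosedFieldType) (m : nat) (A : 'M[R]_m) (q : 'cV[R]_m)
  (v : 'I_m -> R) (c : 'I_m) :
  A *m q = \col_i v i ->
  \det A * q c 0 = \det (\matrix_(i, j) (if j == c then v i else A i j)).
Proof.
move=> Aq; rewrite [in RHS](expand_det_col _ c).
have -> : \det A * q c 0 = ((\adj A *m A) *m q) c 0.
  by rewrite mul_adj_mx mul_scalar_mx mxE.
rewrite -mulmxA Aq mxE; apply: eq_bigr => i _.
rewrite !mxE eqxx mulrC; congr (_ * _).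
rewrite /cofactor; congr (_ * \det _); apply/matrixP=> k l; rewrite !mxE.
by rewrite ifF //; apply/negbTE; rewrite eq_sym; exact: neq_lift.
Qed.

Lemma size_mul_bd (R : numClosedFieldType) (p q : {poly R}) (x y : nat) :
  (size p <= x.+1)%N -> (size q <= y.+1)%N -> (size (p * q)%R <= (x + y).+1)%N.
Proof.
move=> hp hq; apply: leq_trans (size_polyMleq p q) _.
move: (size p) (size q) hp hq => u v; lia.
Qed.

Lemma size_mulmonic (R : numClosedFieldType) (p q : {poly R}) :
  p \is monic -> q \is monic -> size (p * q) = (size p + size q).-1.
Proof. by move=> hp hq; rewrite size_Mmonic // monic_neq0. Qed.

Lemma mainlemma (R : numClosedFieldType) (m : nat) (a b c d C : R) (P Q : {poly R})
  (s : nat -> R) (hs : forall k, s k = (a ^+ k + b ^+ k + c ^+ k - d ^+ k) / 2) :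
  P \is monic -> size P = m.+1 -> Q \is monic -> size Q = m.+1 -> C != 0 ->
  ('X - c%:P) * ('X - d%:P) * P ^+ 2 - ('X - a%:P) * ('X - b%:P) * Q ^+ 2 = C%:P ->
  \det (FF s m.+1 m) != 0 /\ Fpoly s m.+1 m = \det (FF s m.+1 m) *: Q.
Proof.
move=> mP sP mQ sQ C0 ident.
have [W eW] : {W : {poly R} | W = ('X - c%:P) * P} by exists (('X - c%:P) * P).
have mW : W \is monic by rewrite eW rpredM ?monicXsubC.
have sW : size W = m.+2 by rewrite eW size_mulmonic ?monicXsubC // size_XsubC sP.
have W1 : W`_m.+1 = 1 by have := monicP mW; rewrite /lead_coef sW.
have Q1 : Q`_m = 1 by have := monicP mQ; rewrite /lead_coef sQ.
have [Qt eQt] : {Qt : {poly R} | Qt = rv m Q} by exists (rv m Q).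
have [Wt eWt] : {Wt : {poly R} | Wt = rv m.+1 W} by exists (rv m.+1 W).
have [f ef] : {f : {poly R} | f = fser s (m + m).+2} by exists (fser s (m + m).+2).
have h1 : 'X^((m + m).+2) %| Wt ^+ 2 * lin d - lin a * lin b * lin c * Qt ^+ 2.
  have eZ : W * W * ('X - d%:P) - ('X - a%:P) * ('X - b%:P) * ('X - c%:P) * (Q * Q)
          = ('X - c%:P) * C%:P by rewrite -ident eW; ring.
  have : 'X^((m + m).+2) %| rv (m + m).+3 (('X - c%:P) * C%:P).
    apply/dvdXnP => i hi; rewrite coef_rv ifT; last by lia.
    apply/leq_sizeP; last by instantiate (1 := 2%N); lia.
    apply: leq_trans (size_polyMleq _ _) _; rewrite size_XsubC.
    by have := size_polyC_leq1 C; case: (size _) => [|[|]].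
  rewrite -eZ rvB; congr (_ %| _ - _).
  - rewrite (_ : (m + m).+3 = (m.+1 + m.+1) + 1)%N; last by lia.
    rewrite rv_mul ?rv_mul ?rv_lin -?eWt ?expr2 ?sW ?size_XsubC //.
    by apply: size_mul_bd; rewrite sW.
  - rewrite (_ : (m + m).+3 = ((1 + 1) + 1) + (m + m))%N; last by lia.
    rewrite rv_mul ?rv_mul ?rv_lin; try by rewrite ?eQt ?expr2 ?sQ ?size_XsubC.
    all: try by rewrite size_mulmonic ?monicXsubC ?size_XsubC.
    all: try by rewrite !size_mulmonic ?monicXsubC ?rpredM ?size_XsubC.
    all: try by apply: size_mul_bd; rewrite sQ.
    by rewrite size_mulmonic ?rpredM ?monicXsubC // size_mulmonic ?monicXsubC // !size_XsubC.
have h2 := series hs (m + m).+2; rewrite -ef in h2.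
have h3 : 'X^((m + m).+2) %| f * Qt - Wt.
  have : 'X^((m + m).+2) %| ((f * Qt) ^+ 2 - Wt ^+ 2) * lin d.
    have -> : ((f * Qt) ^+ 2 - Wt ^+ 2) * lin d =
      Qt ^+ 2 * (f ^+ 2 * lin d - lin a * lin b * lin c)
      - (Wt ^+ 2 * lin d - lin a * lin b * lin c * Qt ^+ 2) by ring.
    by apply: dvdp_sub; first apply: dvdp_mull.
  move/dvdXn_cancel; rewrite -horner_coef0 lin0 oner_neq0 => /(_ isT).
  rewrite subr_sqr; apply: dvdXn_cancel.
  rewrite -horner_coef0 !hornerE !horner_coef0 ef eQt eWt !coef_rv /= !subn0 W1 Q1.
  rewrite coef_poly F0 mulr1 -mulr2n mulrn_eq0 /= oner_eq0 //.
pose qw := fun j : 'I_m => Q`_(m - j.+1).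
have hQt : Qt = 1 + Lw qw.
  apply/polyP => k; rewrite eQt coef_rv coefD coef1.
  case: k => [|j]; first by rewrite coef_Lw0 subn0 Q1 addr0.
  rewrite /= add0r; case: (ltnP j m) => hj.
    by rewrite (coef_LwS _ (Ordinal hj)).
  by rewrite coef_Lw_big.
have hA : FF s m.+1 m *m \col_j qw j = \col_i (- Fk s (Posz (m.+1 + i.+1)%N)).
  apply/matrixP => i k; rewrite (ord1 k) !mxE.
  have hi := ltn_ord i.
  have hmi : (m.+2 + i < (m + m).+2)%N by lia.
  move/dvdXnP: h3 => /(_ (m.+2 + i)%N hmi) H.
  have {}H : Fk s (Posz (m.+2 + i)%N) + \sum_j FF s m.+1 m i j * qw j = 0.
    rewrite -[X in _ = X]H.
    rewrite coefB hQt mulrDr mulr1 coefD ef coef_fL eWt coef_rv ifF; last by apply/negbTE; lia.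
    by rewrite subr0 coef_poly hmi.
  rewrite (eq_bigr (fun j => FF s m.+1 m i j * qw j)); last by move=> j _; congr (_ * _); rewrite mxE.
  rewrite (_ : (m.+1 + i.+1 = m.+2 + i)%N); last by lia.
  by apply/eqP; rewrite -addr_eq0 addrC; apply/eqP.
have cop : coprimep Q W.
  apply/Bezout_coprimepP.
  exists (- (C^-1)%:P * (('X - a%:P) * ('X - b%:P) * Q), (C^-1)%:P * (('X - d%:P) * P)) => /=.
  have -> : - (C^-1)%:P * (('X - a%:P) * ('X - b%:P) * Q) * Q + (C^-1)%:P * (('X - d%:P) * P) * W
    = (C^-1)%:P * (('X - c%:P) * ('X - d%:P) * P ^+ 2 - ('X - a%:P) * ('X - b%:P) * Q ^+ 2).
    by rewrite eW; ring.
  by rewrite ident -polyCM mulVf // eqpxx.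
have hdet : \det (FF s m.+1 m) != 0.
  apply/negP; rewrite -det_tr => /det0P [v v0 hv].
  pose w := fun j : 'I_m => v 0 j.
  have hv' : FF s m.+1 m *m v^T = 0.
    by have := congr1 trmx hv; rewrite trmx_mul trmxK trmx0.
  have hfL : forall i : 'I_m, (f * Lw w)`_(m.+2 + i) = 0.
    move=> i; rewrite ef coef_fL.
    have := congr1 (fun M : 'M_(m, 1) => M i ord0) hv'; rewrite !mxE => E.
    by rewrite -[X in _ = X]E; apply: eq_bigr => j _; rewrite [v^T _ _]mxE.
  have [S' eS'] : {S' : {poly R} | S' = take_poly m.+2 (f * Lw w)} by eexists.
  have h6 : 'X^((m + m).+2) %| f * Lw w - S'.
    apply/dvdXnP => i hi; rewrite coefB eS' coef_take_poly.
    case: ltnP => hi2; first by rewrite subrr.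
    have hi3 : (i - m.+2 < m)%N by lia.
    by rewrite subr0 (_ : i = m.+2 + Ordinal hi3)%N ?hfL //= subnKC.
  have hD : Lw w * Wt = Qt * S'.
    apply/eqP; rewrite -subr_eq0; apply/eqP; apply: (dvdXn_small (n := (m + m).+2)).
      apply: leq_trans (size_add _ _) _; rewrite size_opp geq_max.
      have sb : forall p q : {poly R}, (size p <= m.+1)%N -> (size q <= m.+2)%N ->
          (size (p * q)%R <= (m + m).+2)%N.
        by move=> p q hp hq; rewrite -addnS; exact: size_mul_bd.
      apply/andP; split.
        apply: sb; first exact: size_Lw.
        by rewrite eWt; apply: size_poly.
      apply: sb; first by rewrite eQt; apply: size_poly.
      by rewrite eS'; apply/leq_sizeP => j hj; rewrite coef_take_poly ltnNge hj.
    have -> : Lw w * Wt - Qt * S' = Qt * (f * Lw w - S') - Lw w * (f * Qt - Wt) by ring.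
    by apply: dvdp_sub; apply: dvdp_mull.
  have := congr1 (rv (m + m.+1)) hD.
  rewrite rv_mul ?size_Lw //; try (by rewrite eWt; apply: size_poly);
    try (by rewrite eQt; apply: size_poly);
    try (by rewrite eS'; apply/leq_sizeP => j hj; rewrite coef_take_poly ltnNge hj).
  rewrite eQt eWt !rv_rv ?sQ ?sW // => hD2.
  have dv : Q %| rv m (Lw w).
    rewrite -(Gauss_dvdpl _ cop) hD2 rv_mul ?rv_rv ?sQ ?dvdp_mulIl //; first exact: size_poly.
    by rewrite eS'; apply/leq_sizeP => j hj; rewrite coef_take_poly ltnNge hj.
  have sL : (size (rv m (Lw w)) <= m)%N.
    apply/leq_sizeP => j hj; rewrite coef_rv.
    case: ifP => // hj2; rewrite (_ : m - j = 0)%N ?coef_Lw0 //; lia.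
  have L0 : rv m (Lw w) = 0.
    apply/eqP; apply: contraT => nz; have := dvdp_leq nz dv; rewrite sQ => h.
    by have := leq_trans h sL; rewrite ltnn.
  have L0' : Lw w = 0 by rewrite -(rv_rv (size_Lw w)) L0 rv0.
  case/eqP: v0; apply/matrixP => i j; rewrite (ord1 i) !mxE.
  by rewrite -[v 0 j]/(w j) -coef_LwS L0' coef0.
split => //.
have hc : forall c0 : 'I_m, \det (@FFi R s m.+1 m c0) = \det (FF s m.+1 m) * qw c0.
  move=> c0; have := cramer c0 hA; rewrite mxE => ->; rewrite /FFi.
  by congr (\det _); apply/matrixP => i j; rewrite !mxE.
rewrite /Fpoly (eq_bigr (fun c0 => \det (FF s m.+1 m) *: (qw c0 *: 'X^(m - c0.+1)))); last first.
  by move=> c0 _; rewrite hc scalerA.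
rewrite -scaler_sumr -scalerDr; congr (_ *: _).
rewrite [in RHS](poly_le (n := m.+1) (p := Q)) ?sQ // big_ord_recr /= Q1 scale1r addrC.
congr (_ + _); rewrite (reindex_inj rev_ord_inj) /=; apply: eq_bigr => i _.
have hi := ltn_ord i; rewrite /qw /= (_ : (m - (m - i.+1).+1 = i)%N) //; lia.
Qed.

Theorem theorem2 (R : numClosedFieldType) (m : nat) (a b c d : R)
    (T U : {poly R}) (x y : 'I_m -> R) :
    size T = (2 * m + 2).+1 ->
    (size U <= (2 * m + 2) - 1)%N ->
    T ^+ 2 - Hpoly a b c d * U ^+ 2 = 1 ->
    T = 1 - (2 / ((a - c) * (a - d) * \prod_(j < m) (a - x j) ^+ 2)) *:
          (('X - c%:P) * ('X - d%:P) * \prod_(j < m) ('X - (x j)%:P) ^+ 2) ->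
    T = -1 + (2 / ((c - a) * (c - b) * \prod_(j < m) (c - y j) ^+ 2)) *:
          (('X - a%:P) * ('X - b%:P) * \prod_(j < m) ('X - (y j)%:P) ^+ 2) ->
    let s := fun k : nat => (a ^+ k + b ^+ k + c ^+ k - d ^+ k) / 2 in
    \det (FF s m.+1 m) != 0 /\
    Fpoly s m.+1 m = \det (FF s m.+1 m) *: \prod_(j < m) ('X - (y j)%:P).
Proof.
move=> hT _ _.
move: (2 / ((a - c) * (a - d) * \prod_(j < m) (a - x j) ^+ 2)) => al.
move: (2 / ((c - a) * (c - b) * \prod_(j < m) (c - y j) ^+ 2)) => be.
move=> h1 h2 s.
rewrite !prodrXl in h1 h2.
have mP : \prod_(j < m) ('X - (x j)%:P) \is monic := monic_prod_XsubC _ _ _.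
have mQ : \prod_(j < m) ('X - (y j)%:P) \is monic := monic_prod_XsubC _ _ _.
have sP := size_prodX x; have sQ := size_prodX y.
move: (\prod_(j < m) ('X - (x j)%:P)) mP sP h1 => P mP sP h1.
move: (\prod_(j < m) ('X - (y j)%:P)) mQ sQ h2 => Q mQ sQ h2.
have sA : forall (u v : R) (P0 : {poly R}), P0 \is monic -> size P0 = m.+1 ->
    size (('X - u%:P) * ('X - v%:P) * P0 ^+ 2) = (m + m).+3.
  move=> u v P0 m0 s0.
  have s1 : size (('X - u%:P) * ('X - v%:P)) = 3.
    by rewrite size_mulmonic ?monicXsubC // !size_XsubC.
  have s2 : size (P0 ^+ 2) = (m + m).+1.
    by rewrite expr2 size_mulmonic // s0 /= addnS.
  by rewrite size_mulmonic ?rpredM ?rpredX ?monicXsubC // s1 s2.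
have cA : forall (u v : R) (P0 : {poly R}), P0 \is monic -> size P0 = m.+1 ->
    (('X - u%:P) * ('X - v%:P) * P0 ^+ 2)`_((m + m).+2) = 1.
  move=> u v P0 m0 s0.
  have := monicP (_ : ('X - u%:P) * ('X - v%:P) * P0 ^+ 2 \is monic).
  by rewrite /lead_coef sA // => ->; rewrite ?rpredM ?rpredX ?monicXsubC.
have al0 : al != 0.
  apply/eqP => al0; move: hT; rewrite h1 al0 scale0r subr0 size_poly1 => H; lia.
have E := etrans (esym h1) h2.
have hbe : be = - al.
  have := congr1 (fun p : {poly R} => p`_((m + m).+2)) E.
  rewrite /= coefB coef1 coefZ cA // coefD coefN coef1 coefZ cA //= !mulr1.
  by rewrite oppr0 !add0r => ->.
rewrite hbe -!mul_polyC polyCN in E.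
have E2 : al%:P * (('X - c%:P) * ('X - d%:P) * P ^+ 2 - ('X - a%:P) * ('X - b%:P) * Q ^+ 2)
    = 1 + 1.
  rewrite (_ : al%:P * _ = (1 + 1) - ((1 - al%:P * (('X - c%:P) * ('X - d%:P) * P ^+ 2))
     - (-1 + - al%:P * (('X - a%:P) * ('X - b%:P) * Q ^+ 2)))); last by ring.
  by rewrite E subrr subr0.
apply: (mainlemma (C := al^-1 * (1 + 1)) (fun k => erefl) mP sP mQ sQ).
  by rewrite mulf_neq0 ?invr_eq0 // -mulr2n mulrn_eq0 oner_eq0.
by rewrite polyCM polyCD polyC1 -E2 [in RHS]mulrA -polyCM mulVf // polyC1 mul1r.
Qed.
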